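(* Let $\mathbb{K}$ be an algebraically closed field of characteristic $0$, let $p\in\mathbb{K}[x,y]\setminus(\mathbb{K}[x]\cup\mathbb{K}[y])$ be irreducible with $\mathrm{F}(p)\cong\mathbb{K}$, and let $r\in\mathbb{K}[x,y]_p\setminus\langle p\rangle$. Assume that the orbit $\mathcal{O}$ of a pole of $r$ on the curve $C$ associated with $p$ is infinite. Then there is an infinite path in the graph of $\mathcal{O}$ that contains no cycle (its vertices are pairwise distinct), starts at some pole of $r$, and contains no other pole of $r$.
   Context: $\mathbb{K}[x,y]_p$ is the set of $h\in\mathbb{K}(x,y)$ whose reduced denominator is not divisible by $p$; $\langle p\rangle=\{qp:q\in\mathbb{K}[x,y]_p\}$; $\mathrm{F}(p)=\{(f,g)\in\mathbb{K}(x)\times\mathbb{K}(y):f-g\in\langle p\rangle\}$, a field under componentwise operations; $\mathrm{F}(p)\cong\mathbb{K}$ means it consists only of pairs of equal constants. $C\subset\mathbb{P}^1(\mathbb{K})\times\mathbb{P}^1(\mathbb{K})$ is the zero set of the bi-homogenization $x_0^{\deg_x p}y_0^{\deg_y p}p(x_1/x_0,y_1/y_0)$. Orbits are the classes of the smallest equivalence relation on $C$ with $(a,b)\sim(c,d)$ whenever $a=c$ or $b=d$. The graph of an orbit has the elements of the orbit as vertices, two distinct vertices forming an edge when they share a coordinate; a path is a sequence of vertices with consecutive ones adjacent. A point $(\infty,\infty)\in C$ is a pole of $r$ if there is a Puiseux series $\varphi\in\mathbb{K}\{\{x^{-1}\}\}$ with $p(x,\varphi)=0$, $\deg\varphi>0$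 and $\deg r(x,\varphi)>0$ (degree = largest exponent of $x$); a general point $(s_1,s_2)\in C$ is a pole of $r$ if, for a pair $T$ of Möbius transformations sending $(s_1,s_2)$ to $(\infty,\infty)$, $(\infty,\infty)$ is a pole of $r\circ T^{-1}$ on the curve of the numerator of $p\circ T^{-1}$. *)

(* Defs.v *)
From HB Require Import structures.
From mathcomp Require Import all_boot all_order all_algebra.
From Stdlib Require Import Relation_Operators.
Set Implicit Arguments. Unset Strict Implicit. Unset Printing Implicit Defensive.
Import Order.TTheory GRing.Theory Num.Theory.
Local Open Scope ring_scope.

Section Defs.
Variable K : fieldType.

(* Bivariate polynomials K[x,y] are {poly {poly K}}: the OUTER variable is y,
   the INNER variable is x.  q`_j`_i is the coefficient of x^i y^j. *)
Notation bipoly := {poly {poly K}}.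
Notation ratfun := {fraction bipoly}.
Definition tofr (q : bipoly) : ratfun := FracField.tofrac q.

Definition polyx (u : {poly K}) : bipoly := u%:P.
Definition polyy (u : {poly K}) : bipoly := map_poly polyC u.

Definition degy (q : bipoly) : nat := (size q).-1.
Definition degx (q : bipoly) : nat := (\max_(j < size q) (size (nth 0%R (polyseq q) j)).-1)%N.

Definition dvd2 (p b : bipoly) : Prop := exists q : bipoly, b = q * p.

Definition irreducible2 (p : bipoly) : Prop :=
  p != 0 /\ p \isn't a GRing.unit /\
  forall a b : bipoly, p = a * b -> a \is a GRing.unit \/ b \is a GRing.unit.

Definition localp (p : bipoly) (h : ratfun) : Prop :=
  exists a b : bipoly, ~ dvd2 p b /\ h = tofr a / tofr b.

Definition idealp (p : bipoly) (h : ratfun) : Prop :=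
  exists q : ratfun, localp p q /\ h = q * tofr p.

(* F(p) ~= K : every (f,g) in K(x) x K(y) with f - g in <p> is a pair of
   equal constants.  f = u/v (u,v in K[x]), g = u'/v' (u',v' in K[y]). *)
Definition Fp_trivial (p : bipoly) : Prop :=
  forall u v u' v' : {poly K}, v != 0 -> v' != 0 ->
    idealp p (tofr (polyx u) / tofr (polyx v) - tofr (polyy u') / tofr (polyy v')) ->
    exists c : K, u = c *: v /\ u' = c *: v'.

(* None = infinity, Some s = s *)
Definition P1 := option K.
Definition hcoord (s : P1) : K * K :=
  match s with None => (0, 1) | Some c => (1, c) end.

(* bi-homogenization x0^dx y0^dy p(x1/x0, y1/y0) evaluated at homogeneous coords *)
Definition bihom_eval (p : bipoly) (X Y : K * K) : K :=
  \sum_(j < size p) \sum_(i < size p`_j)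
     p`_j`_i * X.2 ^+ i * X.1 ^+ (degx p - i) * Y.2 ^+ j * Y.1 ^+ (degy p - j).

Definition onC (p : bipoly) (P : P1 * P1) : Prop :=
  bihom_eval p (hcoord P.1) (hcoord P.2) = 0.

(* Ser e c represents sum_{m>=0} c m * t^(e - m). *)
Record ser := Ser { stop : int; scoef : nat -> K }.

Definition coefAt (f : ser) (e : int) : K :=
  match stop f - e with Posz m => scoef f m | Negz _ => 0 end.

Definition sadd (f g : ser) : ser :=
  let e := Order.max (stop f) (stop g) in
  Ser e (fun m => coefAt f (e - m%:Z) + coefAt g (e - m%:Z)).
Definition smul (f g : ser) : ser :=
  Ser (stop f + stop g) (fun m => \sum_(i < m.+1) scoef f i * scoef g (m - i)).
Definition sconst (a : K) : ser := Ser 0 (fun m => if m == 0%N then a else 0).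
Definition stpow (k : nat) : ser := Ser k%:Z (fun m => if m == 0%N then 1 else 0).
Definition sexp (f : ser) (j : nat) : ser := iter j (smul f) (sconst 1).

Definition szero (f : ser) : Prop := forall e : int, coefAt f e = 0.
Definition has_tdeg (f : ser) (d : int) : Prop :=
  coefAt f d != 0 /\ forall e : int, d < e -> coefAt f e = 0.

(* u(x) with x = t^n *)
Definition evalx (n : nat) (u : {poly K}) : ser :=
  \big[sadd/sconst 0]_(i < size u) smul (sconst u`_i) (stpow (n * i)).
(* q(x, phi) with x = t^n *)
Definition eval2 (n : nat) (q : bipoly) (phi : ser) : ser :=
  \big[sadd/sconst 0]_(j < size q) smul (evalx n q`_j) (sexp phi j).

(* T sends s to infinity: T = id if s = infinity, T(u) = 1/(u - s) otherwise,
   so T^-1(u) = s + 1/u.  transf s1 s2 N M q = x^N y^M q(T1^-1 x, T2^-1 y)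
   (with no factor for an infinite coordinate). *)
Definition mobx (s : P1) (N i : nat) : {poly K} :=
  match s with None => 'X^i | Some c => (c *: 'X + 1) ^+ i * 'X^(N - i) end.
Definition moby (s : P1) (M j : nat) : bipoly :=
  match s with None => 'X^j | Some c => (c%:P *: 'X + 1) ^+ j * 'X^(M - j) end.
Definition transf (s1 s2 : P1) (N M : nat) (q : bipoly) : bipoly :=
  \sum_(j < size q) \sum_(i < size q`_j)
     polyx (q`_j`_i *: mobx s1 N i) * moby s2 M j.

(* pole at (infinity, infinity) of a/b on the curve of P (all already transformed):
   a Puiseux series phi in K{{x^-1}} (phi in t = x^(1/n)) with P(x,phi) = 0,
   deg phi > 0 and deg (a/b)(x,phi) > 0. *)
Definition pole_infty (P a b : bipoly) : Prop :=
  exists (n : nat) (phi : ser), (0 < n)%N /\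
    szero (eval2 n P phi) /\
    (exists d, has_tdeg phi d /\ 0 < d) /\
    (exists da db, has_tdeg (eval2 n a phi) da /\ has_tdeg (eval2 n b phi) db /\ db < da).

Definition pole (p : bipoly) (r : ratfun) (S : P1 * P1) : Prop :=
  onC p S /\
  exists a b : bipoly, b != 0 /\ r = tofr a / tofr b /\
    let N := maxn (degx a) (degx b) in
    let M := maxn (degy a) (degy b) in
    pole_infty (transf S.1 S.2 (degx p) (degy p) p)
               (transf S.1 S.2 N M a) (transf S.1 S.2 N M b).

Definition adjC (p : bipoly) (U V : P1 * P1) : Prop :=
  onC p U /\ onC p V /\ (U.1 = V.1 \/ U.2 = V.2).

Definition curve_orbit (p : bipoly) (S V : P1 * P1) : Prop :=
  onC p S /\ clos_refl_trans _ (adjC p) S V.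

Definition infinite_set (A : P1 * P1 -> Prop) : Prop :=
  ~ exists s : seq (P1 * P1), forall V, A V -> V \in s.

End Defs.

(* Main.v *)
Require Import Defs.
From HB Require Import structures.
From mathcomp Require Import all_boot all_order all_algebra zify ring.
From Stdlib Require Import Relation_Operators Operators_Properties Classical ClassicalEpsilon.
Import Order.TTheory GRing.Theory Num.Theory.
Set Implicit Arguments. Unset Strict Implicit.


Section Graph.
Variables (T : eqType) (E : T -> T -> Prop) (P : T -> Prop) (S : T).
Hypothesis locfin : forall u, exists s : seq T, forall v, E u v -> v \in s.
Hypothesis finP : exists s : seq T, forall v, P v -> v \in s.
Hypothesis PS : P S.
Hypothesis infO : ~ exists s : seq T, forall v, clos_refl_trans T E S v -> v \in s.

Definition Good (X : seq T) v := v \notin X /\ ~ P v.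

Inductive Rv (X : seq T) : T -> T -> Prop :=
| rv0 u : Good X u -> Rv X u u
| rvS u v w : Good X u -> E u v -> Rv X v w -> Rv X u w.

Definition Fin X u := exists s : seq T, forall w, Rv X u w -> w \in s.

Lemma Rv_good X u w : Rv X u w -> Good X u.
Proof. by case. Qed.

Lemma notFin_good X u : ~ Fin X u -> Good X u.
Proof.
move=> h; apply: NNPP => hg; apply: h; exists [::] => w hr.
by case: hg; apply: Rv_good hr.
Qed.

Lemma Rv_dec X u x w : Rv X x w ->
  w = u \/ (exists v, E u v /\ Rv (u :: X) v w) \/ Rv (u :: X) x w.
Proof.
elim=> [y [hy1 hy2] | y v w' [hy1 hy2] hE hR IH].
  case: (eqVneq y u) => [-> | hne]; first by left.
  right; right; apply: rv0; split => //; by rewrite inE negb_or hne.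
case: IH => [-> | [[v' [h1 h2]] | h]]; first by left.
  by right; left; exists v'.
case: (eqVneq y u) hE => [-> | hne] hE.
  by right; left; exists v; split.
right; right; apply: (rvS (v := v)) => //.
split => //; by rewrite inE negb_or hne.
Qed.

Lemma fin_union (A : seq T) (Q : T -> T -> Prop) :
  (forall a, a \in A -> exists l : seq T, forall w, Q a w -> w \in l) ->
  exists l : seq T, forall a w, a \in A -> Q a w -> w \in l.
Proof.
elim: A => [|a A IH] h; first by exists [::].
have [l1 h1] := h a (mem_head _ _).
have [l2 h2] : exists l : seq T, forall a w, a \in A -> Q a w -> w \in l.
  by apply: IH => b hb; apply: h; rewrite inE hb orbT.
exists (l1 ++ l2) => b w; rewrite inE mem_cat => /orP [/eqP -> | hb] hq.
  by rewrite (h1 w hq).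
by rewrite (h2 b w hb hq) orbT.
Qed.

Lemma step X u : ~ Fin X u -> exists v, E u v /\ ~ Fin (u :: X) v.
Proof.
move=> hF; apply: NNPP => hn; apply: hF.
have [s hs] := locfin u.
have [l hl] : exists l : seq T, forall v w, v \in s -> (E u v /\ Rv (u :: X) v w) -> w \in l.
  apply: fin_union => v _.
  case: (classic (E u v)) => hE.
    have : Fin (u :: X) v by apply: NNPP => hnf; apply: hn; exists v.
    by move=> [l hl]; exists l => w [_ hw]; apply: hl.
  by exists [::] => w [].
exists (u :: l) => w hw.
case: (Rv_dec u hw) => [-> | [[v [h1 h2]] | h]]; first exact: mem_head.
  by rewrite inE (hl v w) ?orbT // hs.
by have [] := Rv_good h; rewrite mem_head.
Qed.

Lemma Rv_snoc X v x w : Rv X v x -> E x w -> Good X w -> Rv X v w.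
Proof.
elim=> [y hy | y y' w' hy hE hR IH] hxw hw.
  by apply: (rvS (v := w)) => //; apply: rv0.
by apply: (rvS (v := y')) => //; apply: IH.
Qed.

Lemma Rv_mono X X' u w : (forall y, Good X y -> Good X' y) -> Rv X u w -> Rv X' u w.
Proof.
move=> hG; elim=> [y hy | y v w' hy hE hR IH]; first by apply: rv0; apply: hG.
by apply: (rvS (v := v)) => //; apply: hG.
Qed.

Lemma cover w : clos_refl_trans T E S w ->
  P w \/ exists s v, clos_refl_trans T E S s /\ P s /\ E s v /\ Rv [::] v w.
Proof.
move=> hw; have h := clos_rt_rtn1 T E S w hw; clear hw.
elim: h => [|x w' hE hrt IH]; first by left.
case: (classic (P w')) => hP; first by left.
right; case: IH => [hPx | [s [v [h1 [h2 [h3 h4]]]]]].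
  exists x, w'; split; first exact: clos_rtn1_rt.
  by split => //; split => //; apply: rv0.
by exists s, v; do 3!split => //; apply: (Rv_snoc h4 hE).
Qed.

Lemma start : exists s v, clos_refl_trans T E S s /\ P s /\ E s v /\ ~ Fin [::] v.
Proof.
apply: NNPP => hn; apply: infO.
have [sp hsp] := finP.
have [l hl] : exists l : seq T, forall s w, s \in sp ->
    (clos_refl_trans T E S s /\ P s /\ exists v, E s v /\ Rv [::] v w) -> w \in l.
  apply: fin_union => s _.
  have [ns hns] := locfin s.
  have [l hl] : exists l : seq T, forall v w, v \in ns ->
      (clos_refl_trans T E S s /\ P s /\ E s v /\ Rv [::] v w) -> w \in l.
    apply: fin_union => v _.
    case: (classic (clos_refl_trans T E S s /\ P s /\ E s v)) => [[h1 [h2 h3]] | hno].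
      have : Fin [::] v by apply: NNPP => hnf; apply: hn; exists s, v.
      by move=> [l hl]; exists l => w [_ [_ [_ hw]]]; apply: hl.
    by exists [::] => w [h1 [h2 [h3 _]]]; case: hno.
  exists l => w [h1 [h2 [v [h3 h4]]]].
  by apply: (hl v) => //; apply: hns.
exists (sp ++ l) => w hw; rewrite mem_cat.
case: (cover hw) => [hP | [s [v [h1 [h2 [h3 h4]]]]]]; first by rewrite hsp.
apply/orP; right; apply: (hl s) => //; first exact: hsp.
by split => //; split => //; exists v.
Qed.

Definition nxt (h : seq T) : seq T :=
  match h with
  | u :: X => epsilon (inhabits S) (fun v => E u v /\ ~ Fin (u :: X) v) :: h
  | [::] => [::]
  end.

Definition Inv (h : seq T) := exists u X, h = u :: X /\ ~ Fin X u.

Lemma nxt_inv h : Inv h -> Inv (nxt h) /\ E (head S h) (head S (nxt h)) /\ behead (nxt h) = h.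
Proof.
move=> [u [X [-> hF]]] /=.
have hex := step hF.
have := epsilon_spec (inhabits S) (fun v => E u v /\ ~ Fin (u :: X) v) hex.
move=> [h1 h2]; split; last by split.
by eexists; eexists; split; first reflexivity.
Qed.

Theorem ray : exists f : nat -> T,
  (forall i, clos_refl_trans T E S (f i)) /\ injective f /\
  (forall i, E (f i) (f i.+1)) /\ P (f 0) /\ (forall i, 0 < i -> ~ P (f i)).
Proof.
have [s0 [v0 [hs0 [hPs0 [hE0 hF0]]]]] := start.
have hF0' : ~ Fin [:: s0] v0.
  move=> [l hl]; apply: hF0; exists l => w hw; apply: hl.
  apply: (Rv_mono _ hw) => y [_ hy]; split => //; rewrite inE.
  by apply/eqP => hys; apply: hy; rewrite hys.
pose hist i := iter i nxt [:: v0; s0].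
pose f i := if i is i'.+1 then head S (hist i') else s0.
have hinv : forall i, Inv (hist i).
  elim=> [|i IH]; first by exists v0, [:: s0].
  by have [] := nxt_inv IH.
have hE : forall i, E (f i) (f i.+1).
  case=> [|i] //=; by have [_ []] := nxt_inv (hinv i).
have hbeh : forall i, behead (hist i.+1) = hist i.
  by move=> i; have [_ []] := nxt_inv (hinv i).
have hmem : forall j i, i <= j -> f i \in behead (hist j).
  elim=> [|j IH] i hij.
    by move: hij; rewrite leqn0 => /eqP ->; rewrite /= mem_head.
  rewrite hbeh; move: hij; rewrite leq_eqVlt => /orP [/eqP -> | hij].
    have [u [X [hu _]]] := hinv j.
    by rewrite /= hu mem_head.
  have [u [X [hu _]]] := hinv j.
  have := IH i hij; rewrite hu /= => h; by rewrite inE h orbT.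
have hgood : forall j, Good (behead (hist j)) (f j.+1).
  move=> j; have [u [X [hu hF]]] := hinv j.
  by rewrite /= hu /=; apply: notFin_good.
exists f; split.
  elim=> [|i IH] //; apply: rt_trans IH _; exact: rt_step.
split.
  have key : forall i j, i < j -> f i != f j.
    move=> i [|j] // hij; rewrite ltnS in hij.
    have [hn _] := hgood j.
    by apply/eqP => e; move: hn; rewrite -e hmem.
  move=> i j e; apply/eqP; case: (ltngtP i j) => // h.
    by have := key _ _ h; rewrite e eqxx.
  by have := key _ _ h; rewrite e eqxx.
split => //; split => //.
case=> [|i] // _; by have [_ hp] := hgood i.
Qed.

End Graph.

Local Open Scope ring_scope.

Section Series.
Variable K : fieldType.
Implicit Types f g : ser K.

Lemma coefAt_gt f e : stop f < e -> coefAt f e = 0.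
Proof.
rewrite /coefAt; case E: (stop f - e) => [m|m] // lt.
have : 0 <= stop f - e by rewrite E.
lia.
Qed.

Lemma coefAt_sub f (m : nat) : coefAt f (stop f - m%:Z) = scoef f m.
Proof. by rewrite /coefAt opprB addrC subrK. Qed.

Lemma coefAt_sadd f g e : coefAt (sadd f g) e = coefAt f e + coefAt g e.
Proof.
rewrite /sadd; set E := Order.max _ _.
have hf : stop f <= E by rewrite /E le_max lexx.
have hg : stop g <= E by rewrite /E le_max lexx orbT.
case: (lerP e E) => he.
  have -> : e = E - `|E - e|%N%:Z.
    rewrite gez0_abs ?subr_ge0 //; lia.
  by rewrite (coefAt_sub (Ser _ _)).
rewrite !coefAt_gt //= ?addr0 //; lia.
Qed.

Lemma coefAt_sconst0 e : coefAt (sconst (0 : K)) e = 0.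
Proof. by rewrite /coefAt; case: (_ - _) => [[|m]|m]. Qed.


Lemma le_stop_sub (S e : int) : e <= S -> e = S - `|S - e|%N%:Z.
Proof. move=> h; rewrite gez0_abs ?subr_ge0 //; lia. Qed.

Definition sh f := Ser (stop f + 1) (fun m => if m is m'.+1 then scoef f m' else 0).

Lemma coefAt_sh f : coefAt (sh f) =1 coefAt f.
Proof.
move=> e; case: (lerP e (stop f + 1)) => he; last first.
  by rewrite !coefAt_gt //; lia.
rewrite (le_stop_sub he); set M := `|_|%N.
rewrite (coefAt_sub (sh f)) /=.
case: M => [|m]; first by rewrite coefAt_gt //; lia.
have -> : stop f + 1 - m.+1%:Z = stop f - m%:Z by lia.
by rewrite coefAt_sub.
Qed.

Lemma smul_scoef_ext f1 f2 g : stop f1 = stop f2 -> scoef f1 =1 scoef f2 ->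
  coefAt (smul f1 g) =1 coefAt (smul f2 g).
Proof.
move=> hs hc e; rewrite /coefAt /smul /= hs; case: (_ - _) => // m.
by apply: eq_bigr => i _; rewrite hc.
Qed.

Lemma coefAt_smul_sh f g : coefAt (smul (sh f) g) =1 coefAt (smul f g).
Proof.
move=> e; case: (lerP e (stop f + 1 + stop g)) => he; last first.
  by rewrite !coefAt_gt //=; lia.
rewrite (le_stop_sub he); set M := `|_|%N.
have -> : stop f + 1 + stop g = stop (smul (sh f) g) by [].
rewrite coefAt_sub /= big_ord_recl /= mul0r add0r.
case: M => [|m]; first by rewrite big_ord0 coefAt_gt //=; lia.
have -> : stop f + 1 + stop g - m.+1%:Z = stop (smul f g) - m%:Z by rewrite /=; lia.
rewrite coefAt_sub /=; apply: eq_bigr => i _.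
by rewrite /bump /= add1n subSS.
Qed.

Lemma coefAt_smulC f g : coefAt (smul f g) =1 coefAt (smul g f).
Proof.
move=> e; case: (lerP e (stop f + stop g)) => he; last first.
  by rewrite !coefAt_gt //=; lia.
rewrite (le_stop_sub he); set M := `|_|%N.
have -> : stop f + stop g = stop (smul f g) by [].
rewrite coefAt_sub.
have -> : stop (smul f g) = stop (smul g f) by rewrite /= addrC.
rewrite coefAt_sub /= (reindex_inj rev_ord_inj) /=; apply: eq_bigr => i _.
rewrite subSS mulrC subKn //; exact: (ltn_ord i).
Qed.

Lemma stop_iter_sh j f : stop (iter j sh f) = stop f + j%:Z.
Proof. elim: j => [|j IH] /=; first by rewrite addr0. by rewrite IH; lia. Qed.

Lemma coefAt_iter_sh j f : coefAt (iter j sh f) =1 coefAt f.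
Proof. elim: j => [|j IH] e //=. by rewrite coefAt_sh IH. Qed.

Lemma coefAt_smul_iter_sh j f g : coefAt (smul (iter j sh f) g) =1 coefAt (smul f g).
Proof. elim: j => [|j IH] e //=. by rewrite coefAt_smul_sh IH. Qed.

Lemma smul_extl f1 f2 g : coefAt f1 =1 coefAt f2 ->
  coefAt (smul f1 g) =1 coefAt (smul f2 g).
Proof.
move=> h e.
pose U := Order.max (stop f1) (stop f2).
have h1 : stop f1 <= U by rewrite /U le_max lexx.
have h2 : stop f2 <= U by rewrite /U le_max lexx orbT.
pose j1 := `|U - stop f1|%N; pose j2 := `|U - stop f2|%N.
have s1 : stop (iter j1 sh f1) = U by rewrite stop_iter_sh /j1 gez0_abs ?subr_ge0 //; lia.
have s2 : stop (iter j2 sh f2) = U by rewrite stop_iter_sh /j2 gez0_abs ?subr_ge0 //; lia.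
rewrite -(coefAt_smul_iter_sh j1) -(coefAt_smul_iter_sh j2 f2).
apply: smul_scoef_ext; first by rewrite s1 s2.
move=> m; rewrite -(coefAt_sub (iter j1 sh f1)) -(coefAt_sub (iter j2 sh f2)) s1 s2.
by rewrite !coefAt_iter_sh h.
Qed.

Lemma smul_ext f1 f2 g1 g2 : coefAt f1 =1 coefAt f2 -> coefAt g1 =1 coefAt g2 ->
  coefAt (smul f1 g1) =1 coefAt (smul f2 g2).
Proof.
move=> hf hg e; rewrite (smul_extl g1 hf) coefAt_smulC (smul_extl f2 hg).
by rewrite coefAt_smulC.
Qed.

Definition bnd f (U : int) := forall e, U < e -> coefAt f e = 0.

Definition nrm (U : int) f := Ser U (fun m => coefAt f (U - m%:Z)).

Lemma coefAt_nrm U f : bnd f U -> coefAt (nrm U f) =1 coefAt f.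
Proof.
move=> hb e; case: (lerP e U) => he; last by rewrite hb // coefAt_gt.
by rewrite (le_stop_sub he) (coefAt_sub (nrm U f)).
Qed.

Lemma coefAt_smul_bnd f g U1 U2 (m : nat) : bnd f U1 -> bnd g U2 ->
  coefAt (smul f g) (U1 + U2 - m%:Z) =
  \sum_(i < m.+1) coefAt f (U1 - i%:Z) * coefAt g (U2 - (m - i)%N%:Z).
Proof.
move=> hf hg.
rewrite -(smul_ext (coefAt_nrm hf) (coefAt_nrm hg)).
by rewrite (coefAt_sub (smul (nrm U1 f) (nrm U2 g))).
Qed.

Lemma bnd_smul f g U1 U2 : bnd f U1 -> bnd g U2 -> bnd (smul f g) (U1 + U2).
Proof.
move=> hf hg e he.
rewrite -(smul_ext (coefAt_nrm hf) (coefAt_nrm hg)).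
by rewrite coefAt_gt.
Qed.

Lemma bnd_sadd f g U : bnd f U -> bnd g U -> bnd (sadd f g) U.
Proof. by move=> hf hg e he; rewrite coefAt_sadd hf ?hg ?addr0. Qed.

Lemma bnd_le f U U' : bnd f U -> U <= U' -> bnd f U'.
Proof. move=> h hu e he; apply: h; lia. Qed.


Definition tr (U : int) (k : nat) f : {poly K} := \poly_(m < k) coefAt f (U - m%:Z).
Definition eqm k (P Q : {poly K}) := forall m, (m < k)%N -> P`_m = Q`_m.
Definition rep k U f P := bnd f U /\ eqm k (tr U k f) P.

Lemma eqm_refl k P : eqm k P P. Proof. by []. Qed.
Lemma eqm_sym k P Q : eqm k P Q -> eqm k Q P. Proof. by move=> h m hm; rewrite h. Qed.
Lemma eqm_trans k P Q R : eqm k P Q -> eqm k Q R -> eqm k P R.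
Proof. by move=> h1 h2 m hm; rewrite h1 ?h2. Qed.
Lemma eqm_add k P Q P' Q' : eqm k P P' -> eqm k Q Q' -> eqm k (P + Q) (P' + Q').
Proof. by move=> h1 h2 m hm; rewrite !coefD h1 ?h2. Qed.
Lemma eqm_mul k P Q P' Q' : eqm k P P' -> eqm k Q Q' -> eqm k (P * Q) (P' * Q').
Proof.
move=> h1 h2 m hm; rewrite !coefM; apply: eq_bigr => i _.
have hi : (i < k)%N by apply: leq_ltn_trans hm; rewrite -ltnS.
rewrite h1 // h2 //; apply: leq_ltn_trans hm; exact: leq_subr.
Qed.

Lemma coef_tr U k f m : (m < k)%N -> (tr U k f)`_m = coefAt f (U - m%:Z).
Proof. by move=> h; rewrite coef_poly h. Qed.

Lemma rep_ext k U f P Q : eqm k P Q -> rep k U f P -> rep k U f Q.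
Proof. by move=> h [hb he]; split => //; apply: eqm_trans he h. Qed.

Lemma rep_add k U f g P Q : rep k U f P -> rep k U g Q -> rep k U (sadd f g) (P + Q).
Proof.
move=> [hf ef] [hg eg]; split; first exact: bnd_sadd.
move=> m hm; rewrite coef_tr // coefAt_sadd coefD -ef // -eg //.
by rewrite !coef_tr.
Qed.

Lemma rep_mul k U1 U2 f g P Q : rep k U1 f P -> rep k U2 g Q ->
  rep k (U1 + U2) (smul f g) (P * Q).
Proof.
move=> [hf ef] [hg eg]; split; first exact: bnd_smul.
apply: eqm_trans (eqm_mul ef eg).
move=> m hm; rewrite coef_tr // coefAt_smul_bnd // coefM; apply: eq_bigr => i _.
have hi : (i < k)%N by apply: leq_ltn_trans hm; rewrite -ltnS.
rewrite !coef_tr //; apply: leq_ltn_trans hm; exact: leq_subr.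
Qed.

Lemma rep_shift k U f P (j : nat) : rep k U f P -> rep k (U + j%:Z) f ('X^j * P).
Proof.
move=> [hf ef]; split; first by apply: (bnd_le hf); lia.
move=> m hm; rewrite coef_tr // coefXnM.
case: ltnP => hmj; first by rewrite hf //; lia.
rewrite -ef; last by apply: leq_ltn_trans hm; exact: leq_subr.
rewrite coef_tr; last by apply: leq_ltn_trans hm; exact: leq_subr.
congr coefAt; lia.
Qed.

Lemma rep_const k c : rep k 0 (sconst c) c%:P.
Proof.
split; first by move=> e he; rewrite coefAt_gt.
move=> m hm; rewrite coef_tr // coefC.
have -> : (0 : int) - m%:Z = stop (sconst c) - m%:Z by [].
by rewrite coefAt_sub.
Qed.

Lemma rep_stpow k j : rep k j%:Z (stpow K j) 1.
Proof.
split; first by move=> e he; rewrite coefAt_gt.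
move=> m hm; rewrite coef_tr // coef1.
have -> : j%:Z - m%:Z = stop (stpow K j) - m%:Z by [].
by rewrite coefAt_sub /=; case: (m == 0)%N.
Qed.

Lemma rep0 k U : rep k U (sconst 0) 0.
Proof.
split; first by move=> e _; rewrite coefAt_sconst0.
by move=> m hm; rewrite coef_tr // coefAt_sconst0 coef0.
Qed.

Lemma rep_big k U (I : Type) (r : seq I) (F : I -> ser K) (P : I -> {poly K}) :
  (forall i, rep k U (F i) (P i)) ->
  rep k U (\big[@sadd K/sconst 0]_(i <- r) F i) (\sum_(i <- r) P i).
Proof.
move=> h; apply: (big_ind2 (rep k U)); first exact: rep0.
  by move=> ? ? ? ?; apply: rep_add.
by move=> i _; apply: h.
Qed.

Lemma rep_sexp k (d : int) phi Phi (j : nat) : rep k d phi Phi ->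
  rep k (d * j%:Z) (sexp phi j) (Phi ^+ j).
Proof.
move=> h; elim: j => [|j IH].
  by rewrite mulr0 expr0; apply: rep_const.
have -> : d * j.+1%:Z = d + d * j%:Z by lia.
by rewrite exprS; apply: rep_mul.
Qed.


Lemma rep_eqU k U U' f P : rep k U f P -> U = U' -> rep k U' f P.
Proof. by move=> h <-. Qed.

Definition BHx (n N : nat) (u : {poly K}) : {poly K} :=
  \sum_(i < size u) (u`_i)%:P * 'X^(n * (N - i))%N.
Definition BH (n d N M : nat) (Phi : {poly K}) (Q : {poly {poly K}}) : {poly K} :=
  \sum_(j < size Q) BHx n N Q`_j * (Phi ^+ j * 'X^(d * (M - j))%N).

Lemma rep_evalx k n N (u : {poly K}) : (size u <= N.+1)%N ->
  rep k (n * N)%N%:Z (evalx n u) (BHx n N u).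
Proof.
move=> hs; rewrite /evalx /BHx; apply: rep_big => i.
have hi : (i <= N)%N by rewrite -ltnS; apply: leq_trans hs.
have := rep_shift (n * (N - i)) (rep_mul (rep_const k u`_i) (rep_stpow k (n * i))).
rewrite mulr1 mulrC => h; apply: (rep_eqU h).
rewrite add0r -PoszD -mulnDr subnKC //.
Qed.

Definition bsz (N M : nat) (Q : {poly {poly K}}) :=
  (size Q <= M.+1)%N /\ forall j, (size (Q`_j)%R <= N.+1)%N.

Lemma rep_eval2 k n (d : nat) N M (Q : {poly {poly K}}) (phi : ser K) (Phi : {poly K}) : bsz N M Q -> rep k d%:Z phi Phi ->
  rep k (n * N + d * M)%N%:Z (eval2 n Q phi) (BH n d N M Phi Q).
Proof.
move=> [hQ hQj] hphi; rewrite /eval2 /BH; apply: rep_big => j.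
have hj : (j <= M)%N by rewrite -ltnS; apply: leq_trans hQ.
have := rep_shift (d * (M - j)) (rep_mul (rep_evalx k n (hQj j)) (rep_sexp j hphi)).
have -> : 'X^(d * (M - j))%N * (BHx n N Q`_j * Phi ^+ j) =
  BHx n N Q`_j * (Phi ^+ j * 'X^(d * (M - j))%N) by rewrite mulrC mulrA.
move=> h; apply: (rep_eqU h).
rewrite -!PoszM -!PoszD -addnA -mulnDr subnKC //.
Qed.

End Series.


Section Alg.
Variable K : fieldType.

Definition ev2 (Q : {poly {poly K}}) (a b : K) : K := (Q.[b%:P]).[a].

Lemma ev2E Q a b : ev2 Q a b =
  \sum_(j < size Q) \sum_(i < size (Q`_j)) Q`_j`_i * a ^+ i * b ^+ j.
Proof.
rewrite /ev2 (horner_coef Q) (big_morph (fun p : {poly K} => p.[a]) (fun p q => hornerD p q a) (horner0 a)); apply: eq_bigr => j _.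
rewrite hornerM -rmorphXn hornerC horner_coef mulr_suml.
by apply: eq_bigr.
Qed.

Lemma ev2M Q1 Q2 a b : ev2 (Q1 * Q2) a b = ev2 Q1 a b * ev2 Q2 a b.
Proof. by rewrite /ev2 !hornerM. Qed.
Lemma ev2D Q1 Q2 a b : ev2 (Q1 + Q2) a b = ev2 Q1 a b + ev2 Q2 a b.
Proof. by rewrite /ev2 !hornerD. Qed.
Lemma ev2_sum (I : Type) (r : seq I) (F : I -> {poly {poly K}}) a b :
  ev2 (\sum_(i <- r) F i) a b = \sum_(i <- r) ev2 (F i) a b.
Proof. by rewrite /ev2 !horner_sum. Qed.
Lemma ev2_polyx w a b : ev2 (polyx w) a b = w.[a].
Proof. by rewrite /ev2 /polyx hornerC. Qed.
Lemma ev2_moby c M j a b :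
  ev2 (moby (Some c) M j) a b = (c * b + 1) ^+ j * b ^+ (M - j).
Proof.
by rewrite /ev2 /moby !hornerE.
Qed.



Lemma homx (w v q P : K) (i N j M : nat) : w != 0 -> v != 0 -> (i <= N)%N -> (j <= M)%N ->
  q * w ^+ (N - i) * (P ^+ j * v ^+ (M - j)) =
  w ^+ N * v ^+ M * (q * w^-1 ^+ i * (P / v) ^+ j).
Proof.
move=> hw hv hi hj.
have eN : w ^+ N = w ^+ i * w ^+ (N - i) by rewrite -exprD subnKC.
have eM : v ^+ M = v ^+ j * v ^+ (M - j) by rewrite -exprD subnKC.
rewrite eN eM exprVn expr_div_n; field.
by rewrite !expf_neq0.
Qed.

Lemma BH_eval n d N M Phi (Q : {poly {poly K}}) (z : K) : z != 0 -> bsz N M Q ->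
  (BH n d N M Phi Q).[z] =
  z ^+ (n * N) * z ^+ (d * M) * ev2 Q (z ^+ n)^-1 (Phi.[z] / z ^+ d).
Proof.
move=> hz [hQ hQj]; rewrite ev2E /BH.
rewrite (big_morph (fun p : {poly K} => p.[z]) (fun p q => hornerD p q z) (horner0 z)).
rewrite mulr_sumr; apply: eq_bigr => j _.
have hj : (j <= M)%N by rewrite -ltnS; apply: leq_trans hQ.
rewrite hornerM /BHx (big_morph (fun p : {poly K} => p.[z]) (fun p q => hornerD p q z) (horner0 z)).
rewrite mulr_suml mulr_sumr; apply: eq_bigr => i _.
have hi : (i <= N)%N by rewrite -ltnS; apply: leq_trans (hQj j).
rewrite !hornerE !exprM.
have H := @homx (z ^+ n) (z ^+ d) (Q`_j`_i) (Phi.[z]) i N j M (expf_neq0 _ hz) (expf_neq0 _ hz) hi hj.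
rewrite !mulrA in H; exact: H.
Qed.


Lemma homog (v x c : K) (j M : nat) : v != 0 -> (j <= M)%N ->
  v ^+ M * ((c * (x / v) + 1) ^+ j * (x / v) ^+ (M - j)) = (c * x + v) ^+ j * x ^+ (M - j).
Proof.
move=> hv hj.
have e1 : c * (x / v) + 1 = (c * x + v) / v by rewrite mulrDl divff // mulrA.
rewrite e1 !expr_div_n -{1}(subnKC hj) exprD.
field. by rewrite !expf_neq0.
Qed.

Definition G (c1 c2 : K) (n d M : nat) (Phi : {poly K}) (q : {poly {poly K}}) : {poly K} :=
  \sum_(j < size q) \sum_(i < size (q`_j))
     (q`_j`_i)%:P * ('X^n + c1%:P) ^+ i * ((c2 *: Phi + 'X^d) ^+ j * Phi ^+ (M - j)).

Lemma ev2_transf c1 c2 N M q a b :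
  ev2 (transf (Some c1) (Some c2) N M q) a b =
  \sum_(j < size q) \sum_(i < size (q`_j))
     q`_j`_i * ((c1 * a + 1) ^+ i * a ^+ (N - i)) * ((c2 * b + 1) ^+ j * b ^+ (M - j)).
Proof.
rewrite /transf ev2_sum; apply: eq_bigr => j _.
rewrite ev2_sum; apply: eq_bigr => i _.
by rewrite ev2M ev2_polyx ev2_moby /mobx !hornerE.
Qed.

Lemma termx (w v P q c1 c2 : K) (i N j M : nat) : w != 0 -> v != 0 ->
  (i <= N)%N -> (j <= M)%N ->
  w ^+ N * v ^+ M * q * (c1 / w + 1) ^+ i * w^-1 ^+ (N - i) *
    (c2 * P * v^-1 + 1) ^+ j * (P / v) ^+ (M - j) =
  q * (w + c1) ^+ i * (c2 * P + v) ^+ j * P ^+ (M - j).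
Proof.
move=> hw hv hi hj.
have eN : w ^+ N = w ^+ i * w ^+ (N - i) by rewrite -exprD subnKC.
have eM : v ^+ M = v ^+ j * v ^+ (M - j) by rewrite -exprD subnKC.
have e1 : c1 / w + 1 = (w + c1) / w by field.
have e2 : c2 * P * v^-1 + 1 = (c2 * P + v) / v by field.
rewrite eN eM e1 e2 !exprVn !expr_div_n; field.
by rewrite !expf_neq0.
Qed.

Lemma BH_transf_eval n d N M Phi c1 c2 (q : {poly {poly K}}) (z : K) :
  z != 0 -> bsz N M (transf (Some c1) (Some c2) N M q) ->
  (size q <= M.+1)%N -> (forall j, (size (q`_j)%R <= N.+1)%N) ->
  (BH n d N M Phi (transf (Some c1) (Some c2) N M q)).[z] = (G c1 c2 n d M Phi q).[z].
Proof.
move=> hz hb hq hqj; rewrite BH_eval // ev2_transf /G.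
rewrite (big_morph (fun p : {poly K} => p.[z]) (fun p q => hornerD p q z) (horner0 z)).
rewrite mulr_sumr; apply: eq_bigr => j _.
have hj : (j <= M)%N by rewrite -ltnS; apply: leq_trans hq.
rewrite (big_morph (fun p : {poly K} => p.[z]) (fun p q => hornerD p q z) (horner0 z)).
rewrite mulr_sumr; apply: eq_bigr => i _.
have hi : (i <= N)%N by rewrite -ltnS; apply: leq_trans (hqj j).
have hw : z ^+ n != 0 by rewrite expf_neq0.
have hv : z ^+ d != 0 by rewrite expf_neq0.
rewrite !hornerE !exprM.
exact: termx.
Qed.


Lemma termg (P w v q c1 c2 : K) (i j M : nat) : P != 0 -> (j <= M)%N ->
  q * (w + c1) ^+ i * (c2 * P + v) ^+ j * P ^+ (M - j) =
  P ^+ M * q * (c1 + w) ^+ i * (c2 + v / P) ^+ j.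
Proof.
move=> hP hj.
have eM : P ^+ M = P ^+ j * P ^+ (M - j) by rewrite -exprD subnKC.
have e2 : c2 + v / P = (c2 * P + v) / P by field.
rewrite eM e2 !expr_div_n [c1 + w]addrC; field.
by rewrite !expf_neq0.
Qed.

Lemma G_eval c1 c2 n d M Phi (q : {poly {poly K}}) (z : K) :
  Phi.[z] != 0 -> (size q <= M.+1)%N ->
  (G c1 c2 n d M Phi q).[z] = Phi.[z] ^+ M * ev2 q (c1 + z ^+ n) (c2 + z ^+ d / Phi.[z]).
Proof.
move=> hP hq; rewrite ev2E /G.
rewrite (big_morph (fun p : {poly K} => p.[z]) (fun p q => hornerD p q z) (horner0 z)).
rewrite mulr_sumr; apply: eq_bigr => j _.
have hj : (j <= M)%N by rewrite -ltnS; apply: leq_trans hq.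
rewrite (big_morph (fun p : {poly K} => p.[z]) (fun p q => hornerD p q z) (horner0 z)).
rewrite mulr_sumr; apply: eq_bigr => i _.
rewrite !hornerE; exact: termg.
Qed.

Lemma term0 (P q c1 c2 : K) (i j M : nat) : (j <= M)%N ->
  q * c1 ^+ i * (c2 * P) ^+ j * P ^+ (M - j) = P ^+ M * q * c1 ^+ i * c2 ^+ j.
Proof.
move=> hj.
have eM : P ^+ M = P ^+ j * P ^+ (M - j) by rewrite -exprD subnKC.
rewrite eM exprMn; ring.
Qed.

Lemma G_at0 c1 c2 n d M Phi (q : {poly {poly K}}) :
  (0 < n)%N -> (0 < d)%N -> (size q <= M.+1)%N ->
  (G c1 c2 n d M Phi q).[0] = Phi.[0] ^+ M * ev2 q c1 c2.
Proof.
move=> hn hd hq; rewrite ev2E /G.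
rewrite (big_morph (fun p : {poly K} => p.[0]) (fun p q => hornerD p q 0) (horner0 0)).
rewrite mulr_sumr; apply: eq_bigr => j _.
have hj : (j <= M)%N by rewrite -ltnS; apply: leq_trans hq.
rewrite (big_morph (fun p : {poly K} => p.[0]) (fun p q => hornerD p q 0) (horner0 0)).
rewrite mulr_sumr; apply: eq_bigr => i _.
rewrite !hornerE !expr0n !eqn0Ngt hn hd /= add0r addr0; exact: term0.
Qed.


Lemma size_lin (R : nzSemiRingType) (c : R) : (size (c *: 'X + 1 : {poly R})%R <= 2)%N.
Proof.
apply: leq_trans (size_polyD _ _) _; rewrite geq_max size_poly1 andbT.
by apply: leq_trans (size_scale_leq _ _) _; rewrite size_polyX.
Qed.

Lemma size_hom (R : nzSemiRingType) (c : R) (i N : nat) : (i <= N)%N ->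
  (size ((c *: 'X + 1) ^+ i * 'X^(N - i) : {poly R})%R <= N.+1)%N.
Proof.
move=> hi; apply: leq_trans (size_polyMleq _ _) _.
have h1 := size_poly_exp_leq (c *: 'X + 1 : {poly R}) i.
have h2 := size_lin c.
rewrite size_polyXn.
have h3 : ((size (c *: 'X + 1 : {poly R})%R).-1 <= 1)%N by lia.
have h4 := leq_mul h3 (leqnn i); rewrite mul1n in h4.
move: h1 h4; set a := (_ * i)%N; set b := size _; lia.
Qed.

Lemma moby_map c M j : moby (Some c) M j = map_poly polyC ((c *: 'X + 1) ^+ j * 'X^(M - j) : {poly K}).
Proof.
have hM : forall x y : {poly K}, map_poly polyC (x * y) = map_poly polyC x * map_poly polyC y.
  by move=> x y; exact: rmorphM.
have hXn : forall (x : {poly K}) n, map_poly polyC (x ^+ n) = map_poly polyC x ^+ n.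
  by move=> x n; exact: rmorphXn.
have hD : forall x y : {poly K}, map_poly polyC (x + y) = map_poly polyC x + map_poly polyC y.
  by move=> x y; exact: rmorphD.
have hX : map_poly polyC ('X : {poly K}) = 'X by exact: map_polyX.
have hZ : map_poly polyC (c *: 'X : {poly K}) = c%:P *: 'X by rewrite map_polyZ hX.
have h1 : map_poly polyC (1 : {poly K}) = 1 by exact: rmorph1.
by rewrite /moby hM !hXn hD hZ h1 hX.
Qed.

Lemma bsz0 N M : bsz N M (0 : {poly {poly K}}).
Proof. by split => [|j]; rewrite ?coef0 size_poly0. Qed.

Lemma bszD N M (P Q : {poly {poly K}}) : bsz N M P -> bsz N M Q -> bsz N M (P + Q).
Proof.
move=> [h1 h2] [h3 h4]; split.
  by apply: leq_trans (size_polyD _ _) _; rewrite geq_max h1 h3.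
by move=> j; rewrite coefD; apply: leq_trans (size_polyD _ _) _; rewrite geq_max h2 h4.
Qed.

Lemma bsz_term N M (w v : {poly K}) : (size w <= N.+1)%N -> (size v <= M.+1)%N ->
  bsz N M (polyx w * map_poly polyC v).
Proof.
move=> hw hv; rewrite /polyx; split.
  apply: leq_trans (size_polyMleq _ _) _; rewrite size_map_polyC.
  have := size_polyC_leq1 w; move: hv; set a := size _; set b := size _; lia.
move=> j; rewrite coefCM coef_map /=.
apply: leq_trans (size_polyMleq _ _) _; have := size_polyC_leq1 (v`_j).
move: hw; set a := size w; set b := size _; lia.
Qed.

Lemma bsz_transf c1 c2 N M (q : {poly {poly K}}) : (size q <= M.+1)%N ->
  (forall j, (size (q`_j)%R <= N.+1)%N) -> bsz N M (transf (Some c1) (Some c2) N M q).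
Proof.
move=> hq hqj; rewrite /transf.
apply: (big_ind (@bsz K N M)); [exact: bsz0 | exact: bszD | move=> j _].
apply: (big_ind (@bsz K N M)); [exact: bsz0 | exact: bszD | move=> i _].
have hj : (j <= M)%N by rewrite -ltnS; apply: leq_trans hq.
have hi : (i <= N)%N by rewrite -ltnS; apply: leq_trans (hqj j).
rewrite moby_map; apply: bsz_term; last exact: size_hom.
by apply: leq_trans (size_scale_leq _ _) _; apply: size_hom.
Qed.

End Alg.


Section Closed.
Variable K : closedFieldType.

Lemma poly_eq_on (P Q W : {poly K}) : W != 0 ->
  (forall z, W.[z] != 0 -> P.[z] = Q.[z]) -> P = Q.
Proof.
move=> hW h; apply/eqP; rewrite -subr_eq0; apply/negP => /negP hPQ.
have /closed_nonrootP [z hz] : (P - Q) * W != 0 by rewrite mulf_neq0.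
move: hz; rewrite /root hornerM mulf_eq0 negb_or => /andP [h1 h2].
by move: h1; rewrite hornerD hornerN h // subrr eqxx.
Qed.

Lemma BH_transf_eq n d N M Phi c1 c2 (q : {poly {poly K}}) :
  (size q <= M.+1)%N -> (forall j, (size (q`_j)%R <= N.+1)%N) ->
  BH n d N M Phi (transf (Some c1) (Some c2) N M q) = G c1 c2 n d M Phi q.
Proof.
move=> hq hqj; apply: (@poly_eq_on _ _ 'X); first by rewrite polyX_eq0.
move=> z; rewrite hornerX => hz.
by apply: BH_transf_eval => //; apply: bsz_transf.
Qed.

Lemma G_prod n d M M0 Phi c1 c2 (a b a0 b0 : {poly {poly K}}) :
  Phi != 0 -> a * b0 = a0 * b ->
  (size a <= M.+1)%N -> (size b <= M.+1)%N ->
  (size a0 <= M0.+1)%N -> (size b0 <= M0.+1)%N ->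
  G c1 c2 n d M Phi a * G c1 c2 n d M0 Phi b0 =
  G c1 c2 n d M0 Phi a0 * G c1 c2 n d M Phi b.
Proof.
move=> hP hab ha hb ha0 hb0; apply: (poly_eq_on hP) => z hz.
rewrite !hornerM !G_eval //.
set x := c1 + _; set y := c2 + _.
have : ev2 (a * b0) x y = ev2 (a0 * b) x y by rewrite hab.
rewrite !ev2M => e.
transitivity (Phi.[z] ^+ M * Phi.[z] ^+ M0 * (ev2 a x y * ev2 b0 x y)); first by ring.
by rewrite e; ring.
Qed.

End Closed.


Section NoPole.
Variable K : closedFieldType.

Lemma size_degy (q : {poly {poly K}}) : (size q <= (degy q).+1)%N.
Proof. by rewrite /degy leqSpred. Qed.

Lemma size_degx (q : {poly {poly K}}) j : (size (q`_j)%R <= (degx q).+1)%N.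
Proof.
case: (ltnP j (size q)) => hj; last by rewrite nth_default // size_poly0.
have := @leq_bigmax _ (fun i : 'I_(size q) => (size (nth 0%R (polyseq q) i)).-1) (Ordinal hj).
rewrite /degx /= => h; apply: leq_trans (leqSpred _) _; by rewrite ltnS.
Qed.

Lemma coef_ord_lt (P : {poly K}) (k : nat) (U : int) (f : ser K) (m : nat) :
  rep k U f P -> (m < k)%N -> P`_m = coefAt f (U - m%:Z).
Proof. by move=> [_ h] hm; rewrite -h // coef_tr. Qed.

Lemma int_aux1 (U da : int) (i m : nat) : m%:Z = U - da -> (i < m)%N -> da < U - i%:Z.
Proof. lia. Qed.
Lemma int_aux2 (U da : int) (m : nat) : m%:Z = U - da -> U - m%:Z = da.
Proof. lia. Qed.

Lemma no_pole (p : {poly {poly K}}) (r : {fraction {poly {poly K}}}) a0 b0 c1 c2 :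
  b0 != 0 -> r = tofr a0 / tofr b0 -> ev2 b0 c1 c2 != 0 -> ~ pole p r (Some c1, Some c2).
Proof.
move=> hb0 hr hev [_ [a [b [hb [hr' Hpi]]]]].
pose N := maxn (degx a) (degx b); pose M := maxn (degy a) (degy b).
change (pole_infty (transf (Some c1) (Some c2) (degx p) (degy p) p)
  (transf (Some c1) (Some c2) N M a) (transf (Some c1) (Some c2) N M b)) in Hpi.
move: Hpi => [n [phi [hn [_ [[d [hd dpos]] [da [db [hA [hB hlt]]]]]]]]].
have hb' : tofr b != 0 by rewrite /tofr tofrac_eq0; exact: hb.
have hb0' : tofr b0 != 0 by rewrite /tofr tofrac_eq0; exact: hb0.
have e : tofr a / tofr b = tofr a0 / tofr b0 by rewrite -hr' -hr.
move: e => /eqP; rewrite (eqr_div _ _ hb' hb0').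
rewrite /tofr -!tofracM tofrac_eq => /eqP hab.
case: d hd dpos => [dn|dn] hd dpos //.
have dn0 : (0 < dn)%N by [].
have [hd0 hd1] := hd.
have hphi : forall k, rep k dn%:Z phi (tr dn%:Z k phi).
  by move=> k; split => //.
have saM : (size a <= M.+1)%N by apply: leq_trans (size_degy a) _; rewrite ltnS leq_maxl.
have sbM : (size b <= M.+1)%N by apply: leq_trans (size_degy b) _; rewrite ltnS leq_maxr.
have saN : forall j, (size (a`_j)%R <= N.+1)%N.
  by move=> j; apply: leq_trans (size_degx a j) _; rewrite ltnS leq_maxl.
have sbN : forall j, (size (b`_j)%R <= N.+1)%N.
  by move=> j; apply: leq_trans (size_degx b j) _; rewrite ltnS leq_maxr.
pose M0 := maxn (degy a0) (degy b0).
have sa0 : (size a0 <= M0.+1)%N by apply: leq_trans (size_degy a0) _; rewrite ltnS leq_maxl.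
have sb0 : (size b0 <= M0.+1)%N by apply: leq_trans (size_degy b0) _; rewrite ltnS leq_maxr.
pose U := (n * N + dn * M)%N.
set A := eval2 n _ phi in hA.
set B := eval2 n _ phi in hB.
have repA := fun k => @rep_eval2 K k n dn N M _ phi _ (bsz_transf c1 c2 saM saN) (hphi k).
have repB := fun k => @rep_eval2 K k n dn N M _ phi _ (bsz_transf c1 c2 sbM sbN) (hphi k).
have [hA0 hA1] := hA.
have [hB0 hB1] := hB.
have daU : da <= U%:Z.
  case: (lerP da U%:Z) => // h; case/negP: hA0; apply/eqP.
  by have [bA _] := repA 0%N; apply: bA.
have dbU : db <= U%:Z.
  case: (lerP db U%:Z) => // h; case/negP: hB0; apply/eqP.
  by have [bB _] := repB 0%N; apply: bB.
pose mA := `|U%:Z - da|%N; pose mB := `|U%:Z - db|%N.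
have eA : mA%:Z = U%:Z - da by rewrite /mA abszE ger0_norm // subr_ge0.
have eB : mB%:Z = U%:Z - db by rewrite /mB abszE ger0_norm // subr_ge0.
have mAB : (mA < mB)%N.
  have : mA%:Z < mB%:Z by rewrite eA eB; move: hlt; clear; lia.
  by rewrite ltz_nat.
pose k := mB.+1.
pose Phi := tr dn%:Z k phi.
have Phi0 : Phi`_0 = coefAt phi dn%:Z by rewrite coef_tr // subr0.
have hPhi : Phi != 0 by apply/eqP => h; move: hd0; rewrite -Phi0 h coef0 eqxx.
have GA := coef_ord_lt (repA k).
have GB := coef_ord_lt (repB k).
rewrite BH_transf_eq // in GA.
rewrite BH_transf_eq // in GB.
have := G_prod n dn c1 c2 hPhi hab saM sbM sa0 sb0.
set GA' := G c1 c2 n dn M Phi a; set GB' := G c1 c2 n dn M Phi b.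
set GA0 := G c1 c2 n dn M0 Phi a0; set GB0 := G c1 c2 n dn M0 Phi b0.
move=> E.
have hGB0 : GB0`_0 != 0.
  rewrite -horner_coef0 /GB0 G_at0 // mulf_neq0 // expf_neq0 //.
  by rewrite horner_coef0 Phi0.
have hGAm : GA'`_mA != 0.
  rewrite GA; last by rewrite /k ltnS ltnW.
  by rewrite (int_aux2 eA).
have hGAlt : forall i, (i < mA)%N -> GA'`_i = 0.
  move=> i hi; rewrite GA; last by rewrite /k ltnS; apply: ltnW; apply: ltn_trans mAB.
  by apply: hA1; apply: (int_aux1 eA).
have hGBlt : forall i, (i < mB)%N -> GB'`_i = 0.
  move=> i hi; rewrite GB; last by rewrite /k ltnS ltnW.
  by apply: hB1; apply: (int_aux1 eB).
have := congr1 (fun P : {poly K} => P`_mA) E; rewrite /= !coefM.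
rewrite big_ord_recr /= subnn big1 ?add0r; last first.
  by move=> i _; rewrite hGAlt ?mul0r.
rewrite big1; last first.
  move=> i _; rewrite hGBlt ?mulr0 //.
  by apply: leq_ltn_trans mAB; apply: leq_subr.
by move/eqP; rewrite mulf_eq0 (negbTE hGAm) (negbTE hGB0).
Qed.

End NoPole.


Section Bezout.
Variable K : closedFieldType.
Notation bipoly := {poly {poly K}}.

Definition divXa (a : K) (g : bipoly) : bipoly :=
  map_poly (fun u : {poly K} => u %/ ('X - a%:P)) g.

Lemma divXaK a (g : bipoly) : (forall j, (g`_j).[a] = 0) -> g = ('X - a%:P) *: divXa a g.
Proof.
move=> h; apply/polyP => j; rewrite coefZ coef_map_id0 ?div0p // mulrC divpK //.
by rewrite dvdp_XsubCl /root h.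
Qed.

Definition eva (a : K) (g : bipoly) : {poly K} := map_poly (horner_eval a) g.

Lemma evaM a (g h : bipoly) : eva a (g * h) = eva a g * eva a h.
Proof. exact: rmorphM. Qed.

Lemma coef_eva a g j : (eva a g)`_j = (g`_j).[a].
Proof. by rewrite coef_map /= horner_evalE. Qed.

Lemma evaZ a (c : {poly K}) (g : bipoly) : eva a (c *: g) = c.[a] *: eva a g.
Proof. by apply/polyP => j; rewrite coefZ !coef_eva coefZ hornerM. Qed.

Lemma scale_bi (c : {poly K}) (g : bipoly) : c *: g = c%:P * g.
Proof. by rewrite mul_polyC. Qed.

Lemma peel_aux n : forall (c : {poly K}) (q g h : bipoly), (size c <= n)%N -> c != 0 ->
  c *: q = g * h -> exists g1 h1 (c1 c2 : {poly K}),
    q = g1 * h1 /\ g = c1 *: g1 /\ h = c2 *: h1 /\ c1 != 0 /\ c2 != 0.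
Proof.
elim: n => [|n IH] c q g h hs hc e.
  by move: hs; rewrite leqn0 size_poly_eq0 (negbTE hc).
case: (eqVneq (size c) 1%N) => hs1.
  have [γ hγ hcγ] := size_poly1P _ (introT eqP hs1).
  exists ((γ^-1)%:P *: g), h, γ%:P, 1; split.
    have : (γ^-1)%:P *: (c *: q) = (γ^-1)%:P *: (g * h) by rewrite e.
    by rewrite scalerA hcγ -polyCM mulVf // scale1r -scalerAl.
  split; first by rewrite scalerA -polyCM divff // scale1r.
  by split; [rewrite scale1r | split; rewrite ?polyC_eq0 ?oner_eq0].
have [a ra] := closed_rootP _ hs1.
have [c' hc'] := factor_theorem _ _ ra.
have hXa : ('X - a%:P : {poly K}) != 0 by rewrite polyXsubC_eq0.
have hc'0 : c' != 0 by apply: contraNneq hc => h0; rewrite hc' h0 mul0r.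
have hsc' : (size c' <= n)%N.
  move: hs; rewrite hc' size_mul // size_XsubC addn2 /=; set z := size c'; lia.
have hev : eva a g * eva a h = 0.
  rewrite -evaM -e evaZ.
  by move/rootP: ra => ->; rewrite scale0r.
have cancel : forall (Y Z : bipoly), ('X - a%:P) *: Y = ('X - a%:P) *: Z -> Y = Z.
  move=> Y Z; rewrite !scale_bi => /eqP; rewrite -subr_eq0 -mulrBr mulf_eq0 polyC_eq0.
  by rewrite (negbTE hXa) /= subr_eq0 => /eqP.
move/eqP: hev; rewrite mulf_eq0 => /orP [/eqP hg | /eqP hh].
  have hg' : g = ('X - a%:P) *: divXa a g.
    by apply: divXaK => j; rewrite -coef_eva hg coef0.
  have e' : c' *: q = divXa a g * h.
    apply: cancel; rewrite scalerA mulrC -hc' e scalerAl -hg' //.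
  have [g1 [h1 [c1 [c2 [E1 [E2 [E3 [E4 E5]]]]]]]] := IH _ _ _ _ hsc' hc'0 e'.
  exists g1, h1, (('X - a%:P) * c1), c2; split => //; split.
    by rewrite hg' E2 scalerA.
  by split => //; split => //; rewrite mulf_neq0.
have hh' : h = ('X - a%:P) *: divXa a h.
  by apply: divXaK => j; rewrite -coef_eva hh coef0.
have e' : c' *: q = g * divXa a h.
  apply: cancel; rewrite scalerA mulrC -hc' e scalerAr -hh' //.
have [g1 [h1 [c1 [c2 [E1 [E2 [E3 [E4 E5]]]]]]]] := IH _ _ _ _ hsc' hc'0 e'.
exists g1, h1, c1, (('X - a%:P) * c2); split => //; split => //.
split; first by rewrite hh' E3 scalerA.
by split => //; rewrite mulf_neq0.
Qed.

Lemma peel (c : {poly K}) (q g h : bipoly) : c != 0 -> c *: q = g * h ->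
  exists g1 h1 (c1 c2 : {poly K}),
    q = g1 * h1 /\ g = c1 *: g1 /\ h = c2 *: h1 /\ c1 != 0 /\ c2 != 0.
Proof. exact: peel_aux. Qed.


Lemma size_scale_eq (c : {poly K}) (g : bipoly) : c != 0 -> size (c *: g) = size g.
Proof. by move=> hc; rewrite scale_bi size_Cmul // polyC_eq0. Qed.

Lemma unit_bi (u : bipoly) : u \is a GRing.unit -> size u = 1%N.
Proof. by rewrite poly_unitE => /andP [/eqP -> _]. Qed.

Lemma irr_notX (p : bipoly) a : irreducible2 p -> (1 < size p)%N ->
  ~ (forall j, (p`_j).[a] = 0).
Proof.
move=> [hp0 [hpu hirr]] hs h.
have hp := divXaK h.
have hXa : ('X - a%:P : {poly K}) != 0 by rewrite polyXsubC_eq0.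
case: (hirr _ _ (etrans hp (scale_bi _ _))) => hu.
  move: hu; rewrite poly_unitE coefC /= => /andP [_].
  by rewrite poly_unitE size_XsubC.
move: hs; rewrite hp size_scale_eq // unit_bi //.
Qed.

Lemma prime_div (p : bipoly) (c : {poly K}) b w : irreducible2 p -> (1 < size p)%N ->
  c != 0 -> c *: b = p * w -> dvd2 p b.
Proof.
move=> [hp0 [hpu hirr]] hs hc e.
have [g1 [h1 [c1 [c2 [E1 [E2 [E3 [E4 E5]]]]]]]] := peel hc e.
case: (hirr _ _ (etrans E2 (scale_bi _ _))) => hu; last first.
  by move: hs; rewrite E2 size_scale_eq // unit_bi.
have hc1 : c1 \is a GRing.unit by move: hu; rewrite poly_unitE coefC /= => /andP [_].
exists (c1^-1 *: h1).
have hg1 : g1 = c1^-1 *: p by rewrite E2 scalerA mulVr // scale1r.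
by rewrite E1 hg1 -scalerAl -scalerAl mulrC.
Qed.

Lemma bezout (p b : bipoly) : irreducible2 p -> (1 < size p)%N -> b != 0 -> ~ dvd2 p b ->
  exists (R : {poly K}) (u v : bipoly), R != 0 /\ R%:P = u * p + v * b.
Proof.
move=> hirr hs hb hnd.
case: (leqP (size b) 1) => hsb.
  exists (b`_0), 0, 1; split; last by rewrite mul0r add0r mul1r -size1_polyC.
  by apply: contraNneq hb => h0; rewrite (size1_polyC hsb) h0.
have [[u v] _ hR] := resultant_in_ideal hs hsb.
case: (eqVneq (resultant p b) 0) => hR0; last by exists (resultant p b), u, v.
exfalso; move: hR0 => /eqP; rewrite resultant_eq0; set g := Pdiv.Idomain.gcdp p b => hg.
have hgp := Pdiv.Idomain.dvdp_gcdl p b.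
have hgb := Pdiv.Idomain.dvdp_gcdr p b.
rewrite Pdiv.Idomain.dvdp_eq -/g in hgp; move/eqP: hgp => hgp.
rewrite Pdiv.Idomain.dvdp_eq -/g in hgb; move/eqP: hgb => hgb.
have [A [B [c1 [c2 [E1 [E2 [E3 [E4 E5]]]]]]]] := peel (Pdiv.Idomain.lc_expn_scalp_neq0 _ _) hgp.
have [_ [_ hirr']] := hirr.
case: (hirr' _ _ E1) => hu; last first.
  by move: hg; rewrite E3 size_scale_eq // unit_bi.
have hA := unit_bi hu.
have hA0 : A`_0 \is a GRing.unit by move: hu; rewrite poly_unitE => /andP [_].
have eA : A = (A`_0)%:P by apply: size1_polyC; rewrite hA.
move: hA0 eA; set κ := A`_0 => hA0 eA.
have hB : B = κ^-1 *: p by rewrite E1 eA -scale_bi scalerA mulVr // scale1r.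
apply: hnd; apply: (@prime_div p _ b ((c2 * κ^-1) *: (b %/ g)) hirr hs (Pdiv.Idomain.lc_expn_scalp_neq0 b g)).
move: hgb; set w := b %/ g => hgb.
by rewrite hgb E3 hB scalerA mulrC -scalerAl scalerAr.
Qed.

End Bezout.


Section Fin.
Variable K : closedFieldType.
Notation bipoly := {poly {poly K}}.

Lemma roots_list (P : {poly K}) : P != 0 -> exists s : seq K, forall c, P.[c] = 0 -> c \in s.
Proof.
move=> hP; have [r hr] := closed_field_poly_normal P.
exists r => c hc.
have : root P c by apply/rootP.
by rewrite hr rootZ ?lead_coef_eq0 // root_prod_XsubC.
Qed.

Lemma list_of_poly (F : K -> K) (P : {poly K}) : P != 0 -> (forall c, F c = P.[c]) ->
  exists s : seq (P1 K), forall y, (match y with None => True | Some c => F c = 0 end) -> y \in s.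
Proof.
move=> hP hF; have [r hr] := roots_list hP.
exists (None :: map Some r) => [[c|]] h; last exact: mem_head.
by rewrite inE /= map_f // hr // -hF.
Qed.

Definition hX (p : bipoly) (X : K * K) (j : nat) : K :=
  \sum_(i < size (p`_j)) p`_j`_i * X.2 ^+ i * X.1 ^+ (degx p - i).

Lemma bihom_Y (p : bipoly) X c :
  bihom_eval p X (hcoord (Some c)) = (\poly_(j < size p) hX p X j).[c].
Proof.
rewrite horner_poly /bihom_eval /=; apply: eq_bigr => j _.
rewrite /hX mulr_suml; apply: eq_bigr => i _.
by rewrite !expr1n !mulr1.
Qed.

Lemma finY (p : bipoly) : irreducible2 p -> (0 < degx p)%N -> (0 < degy p)%N ->
  forall X : P1 K, exists s : seq (P1 K), forall y, onC p (X, y) -> y \in s.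
Proof.
move=> hirr hdx hdy X.
have hsp : (1 < size p)%N by move: hdy; rewrite /degy; case: (size p) => [|[|]].
have hPX : \poly_(j < size p) hX p (hcoord X) j != 0.
  case: X => [a|] /=.
    apply/eqP => h0; apply: (@irr_notX K p a hirr hsp) => j.
    case: (ltnP j (size p)) => hj; last by rewrite nth_default // horner0.
    have := congr1 (fun P : {poly K} => P`_j) h0.
    rewrite coef_poly hj coef0 /hX /= => <-.
    by rewrite horner_coef; apply: eq_bigr => i _; rewrite expr1n mulr1.
  have hcard : (0 < #|[pred j : 'I_(size p) | true]|)%N.
    by rewrite card_ord; lia.
  have [j0 _ hj0] := eq_bigmax_cond (fun j : 'I_(size p) => (size (nth 0%R (polyseq p) j)).-1) hcard.
  have hdx' : degx p = (size p`_j0).-1 by rewrite /degx -hj0; apply: eq_bigl.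
  apply/eqP => /(congr1 (fun P : {poly K} => P`_j0)); rewrite coef_poly ltn_ord coef0 /hX /=.
  have hsz : size p`_j0 = (degx p).+1 by rewrite hdx'; move: hdx; rewrite hdx'; case: (size _).
  rewrite hsz big_ord_recr /= subnn expr0 big1 => [|i _]; last first.
    by rewrite expr0n subn_eq0 leqNgt ltn_ord /= mulr0.
  rewrite add0r expr1n !mulr1 => h.
  have : lead_coef p`_j0 != 0.
    by rewrite lead_coef_eq0 -size_poly_eq0 hsz.
  by rewrite lead_coefE hsz /= h eqxx.
have [s hs] := list_of_poly hPX (bihom_Y p (hcoord X)).
by exists s => y hy; apply: hs; case: y hy.
Qed.


Lemma widen0 (F : nat -> K) m n : (m <= n)%N -> (forall i, (m <= i)%N -> F i = 0) ->
  \sum_(i < m) F i = \sum_(i < n) F i.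
Proof.
move=> hmn hF; rewrite (big_ord_widen n F hmn) big_mkcond; apply: eq_bigr => i _.
by case: ifP => // /negbT; rewrite -leqNgt => h; rewrite hF.
Qed.

Definition gY (p : bipoly) (Y : K * K) (i : nat) : K :=
  \sum_(j < size p) p`_j`_i * Y.2 ^+ j * Y.1 ^+ (degy p - j).

Lemma termY (a b c d : K) : a * b * c * d = a * c * d * b.
Proof. ring. Qed.

Lemma bihom_X (p : bipoly) Y c :
  bihom_eval p (hcoord (Some c)) Y = (\poly_(i < (degx p).+1) gY p Y i).[c].
Proof.
rewrite horner_poly /bihom_eval /=.
transitivity (\sum_(j < size p) \sum_(i < (degx p).+1)
    p`_j`_i * c ^+ i * 1 ^+ (degx p - i) * Y.2 ^+ j * Y.1 ^+ (degy p - j)).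
  apply: eq_bigr => j _.
  apply: (@widen0 (fun i => p`_j`_i * c ^+ i * 1 ^+ (degx p - i) * Y.2 ^+ j * Y.1 ^+ (degy p - j))).
    exact: size_degx.
  by move=> i hi; rewrite nth_default // !mul0r.
rewrite exchange_big /=; apply: eq_bigr => i _.
rewrite /gY mulr_suml; apply: eq_bigr => j _.
by rewrite expr1n mulr1 termY.
Qed.

Lemma coef_hornerC (p : bipoly) b i : (p.[b%:P])`_i = \sum_(j < size p) p`_j`_i * b ^+ j.
Proof.
rewrite horner_coef coef_sum; apply: eq_bigr => j _.
by rewrite -rmorphXn coefMC.
Qed.

Lemma degx0 (p : bipoly) : (forall j, (size (p`_j)%R <= 1)%N) -> degx p = 0%N.
Proof.
move=> h; apply/eqP; rewrite -leqn0; apply/bigmax_leqP => j _.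
by have := h j; rewrite /=; case: (size _) => [|[|]].
Qed.

Lemma finX (p : bipoly) : irreducible2 p -> (0 < degx p)%N -> (0 < degy p)%N ->
  forall Y : P1 K, exists s : seq (P1 K), forall x, onC p (x, Y) -> x \in s.
Proof.
move=> hirr hdx hdy Y.
have hsp : (1 < size p)%N by move: hdy; rewrite /degy; case: (size p) => [|[|]].
have hsz : size p = (degy p).+1 by rewrite /degy prednK // (ltn_trans _ hsp).
have hPY : \poly_(i < (degx p).+1) gY p (hcoord Y) i != 0.
  case: Y => [b|] /=.
    apply/eqP => h0.
    have hroot : p.[b%:P] = 0.
      apply/polyP => i; rewrite coef0 coef_hornerC.
      case: (ltnP i (degx p).+1) => hi.
        have := congr1 (fun P : {poly K} => P`_i) h0.
        rewrite coef_poly hi coef0 /gY /= => h; apply: etrans h.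
        by apply: eq_bigr => j _; rewrite expr1n mulr1.
      by rewrite big1 // => j _; rewrite nth_default ?mul0r //; apply: leq_trans (size_degx p j) hi.
    have /factor_theorem [q hq] : root p (b%:P) by apply/rootP.
    have [_ [_ hirr']] := hirr.
    case: (hirr' _ _ hq) => hu; last first.
      by move: (unit_bi hu); rewrite size_XsubC.
    have hq1 := unit_bi hu.
    have eq : q = (q`_0)%:P by apply: size1_polyC; rewrite hq1.
    have hq0 : size (q`_0) = 1%N by move: hu; rewrite poly_unitE => /andP [_]; rewrite poly_unitE => /andP [/eqP].
    suff : degx p = 0%N by move=> h; move: hdx; rewrite h.
    apply: degx0 => j; rewrite hq eq coefCM.
    apply: leq_trans (size_polyMleq _ _) _; rewrite hq0 add1n /=.
    rewrite coefB coefX coefC; case: j => [|[|j]] /=.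
    - by rewrite sub0r size_polyN size_polyC_leq1.
    - by rewrite subr0 size_poly1.
    - by rewrite subr0 size_poly0.
  pose L := p`_(degy p).
  have hL : L != 0 by rewrite /L /degy -lead_coefE lead_coef_eq0 -size_poly_eq0; lia.
  apply/eqP => /(congr1 (fun P : {poly K} => P`_((size L).-1))).
  have hLs : ((size L).-1 < (degx p).+1)%N.
    have := size_degx p (degy p); rewrite -/L; set z := size L; set w := degx p; lia.
  rewrite coef_poly hLs coef0 /gY /= hsz big_ord_recr /= subnn expr0 big1 => [|j _]; last first.
    by rewrite expr0n subn_eq0 leqNgt ltn_ord /= mulr0.
  rewrite add0r expr1n !mulr1 => h.
  by move: hL; rewrite -lead_coef_eq0 lead_coefE -/L h eqxx.
have [s hs] := list_of_poly hPY (fun c => bihom_X p (hcoord Y) c).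
by exists s => x hx; apply: hs; case: x hx.
Qed.

End Fin.


Lemma fin_union2 (A B : eqType) (l : seq A) (Q : A -> B -> Prop) :
  (forall a, a \in l -> exists s : seq B, forall w, Q a w -> w \in s) ->
  exists s : seq B, forall a w, a \in l -> Q a w -> w \in s.
Proof.
elim: l => [|a l IH] h; first by exists [::].
have [l1 h1] := h a (mem_head _ _).
have [l2 h2] : exists s : seq B, forall a w, a \in l -> Q a w -> w \in s.
  by apply: IH => b hb; apply: h; rewrite inE hb orbT.
exists (l1 ++ l2) => b w; rewrite inE mem_cat => /orP [/eqP -> | hb] hq.
  by rewrite (h1 w hq).
by rewrite (h2 b w hb hq) orbT.
Qed.

Lemma onC_ev2 (K : closedFieldType) (p : {poly {poly K}}) c1 c2 :
  onC p (Some c1, Some c2) -> ev2 p c1 c2 = 0.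
Proof.
rewrite /onC => h; rewrite -[RHS]h /bihom_eval ev2E /=; apply: eq_bigr => j _; apply: eq_bigr => i _.
by rewrite !expr1n !mulr1.
Qed.

Unset Implicit Arguments. Set Strict Implicit.

Theorem proposition10 (K : closedFieldType) (hK : [pchar K] =i pred0)
  (p : {poly {poly K}}) (r : {fraction {poly {poly K}}}) :
  irreducible2 p ->
  (0 < degx p)%N -> (0 < degy p)%N ->
  Fp_trivial p ->
  localp p r -> ~ idealp p r ->
  forall S : P1 K * P1 K, pole p r S -> infinite_set (curve_orbit p S) ->
  exists f : nat -> P1 K * P1 K,
    (forall i, curve_orbit p S (f i)) /\
    injective f /\
    (forall i, (f i).1 = (f i.+1).1 \/ (f i).2 = (f i.+1).2) /\
    pole p r (f 0%N) /\
    (forall i, (0 < i)%N -> ~ pole p r (f i)).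
Proof.
move=> hirr hdx hdy _ [a0 [b0 [hnd hr]]] _ S hS hinf.
have hb0 : b0 != 0 by apply/eqP => h0; apply: hnd; exists 0; rewrite h0 mul0r.
have hsp : (1 < size p)%N by move: hdy; rewrite /degy; case: (size p) => [|[|]].
have [R [u [v [hR hRe]]]] := bezout hirr hsp hb0 hnd.
have [rs hrs] := roots_list hR.
have [sNy hNy] := finY hirr hdx hdy None.
have [sNx hNx] := finX hirr hdx hdy None.
have [sC hC] : exists s : seq (P1 K * P1 K), forall c V, c \in rs ->
    (V.1 = Some c /\ onC p V) -> V \in s.
  apply: fin_union2 => c _.
  have [sc hsc] := finY hirr hdx hdy (Some c).
  exists [seq (Some c, y) | y <- sc] => [[x y]] /= [-> hon].
  by apply: map_f; apply: hsc.
have finP : exists s : seq (P1 K * P1 K), forall V, pole p r V -> V \in s.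
  exists ([seq (None, y) | y <- sNy] ++ [seq (x, None) | x <- sNx] ++ sC).
  move=> [[c1|] [c2|]] hP; rewrite !mem_cat.
  - have hon := hP.1.
    case: (eqVneq (ev2 b0 c1 c2) 0) => hev; last first.
      by case: (no_pole hb0 hr hev hP).
    have hc1 : c1 \in rs.
      apply: hrs; have := congr1 (fun Q => ev2 Q c1 c2) hRe.
      rewrite /= ev2D !ev2M (@onC_ev2 K p c1 c2 hon) hev mulr0 mulr0 addr0.
      by rewrite /ev2 hornerC.
    by apply/orP; right; apply/orP; right; apply: (hC c1).
  - apply/orP; right; apply/orP; left.
    by apply: (map_f (fun x => (x, None))); apply: hNx; exact: hP.1.
  - apply/orP; left.
    by apply: (map_f (fun y => (None, y))); apply: hNy; exact: hP.1.
  - apply/orP; left.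
    by apply: (map_f (fun y => (None, y))); apply: hNy; exact: hP.1.
have locfin : forall U : P1 K * P1 K, exists s : seq (P1 K * P1 K),
    forall V, adjC p U V -> V \in s.
  move=> [x y].
  have [s1 h1] := finY hirr hdx hdy x.
  have [s2 h2] := finX hirr hdx hdy y.
  exists ([seq (x, y') | y' <- s1] ++ [seq (x', y) | x' <- s2]).
  move=> [x' y'] [_ [hon /= [e | e]]]; rewrite mem_cat; rewrite -e in hon *.
    by apply/orP; left; apply: (map_f (fun y' => (x, y'))); apply: h1.
  by apply/orP; right; apply: (map_f (fun x' => (x', y))); apply: h2.
have infO : ~ exists s : seq (P1 K * P1 K),
    forall V, clos_refl_trans (P1 K * P1 K) (adjC p) S V -> V \in s.
  move=> [s hs]; apply: hinf; exists s => V [_ hV]; exact: hs.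
have [f [h1 [h2 [h3 [h4 h5]]]]] := ray locfin finP hS infO.
exists f; split; first by move=> i; split; [exact: hS.1 | exact: h1].
split => //; split => //.
by move=> i; have [_ [_ h]] := h3 i.
Qed.
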